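(* Let $n \ge 2$, let $A$ be an $n \times n$ real matrix with $\mathrm{Tr}(AA^t) = n$, let $O$ be distributed according to Haar measure on $O(n,\mathbb{R})$, and let $W = \mathrm{Tr}(AO)$. Let $f:\mathbb{R}\to\mathbb{R}$ be a twice differentiable function with bounded second derivative. Then \[ \mathbb{E}[f'(W) - Wf(W)] = \mathbb{E}\left[ \frac{p_2(AO) - 1}{n-1} f'(W) \right], \] where $p_2(AO) = \mathrm{Tr}((AO)^2)$. *)

(* Defs.v *)
From HB Require Import structures.
From mathcomp Require Import all_boot all_order all_algebra.
From mathcomp Require Import all_classical all_reals all_analysis.
Set Implicit Arguments. Unset Strict Implicit. Unset Printing Implicit Defensive.
Import Order.TTheory GRing.Theory Num.Theory.
Import numFieldNormedType.Exports.
Local Open Scope ring_scope.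

Definition orthogonal_mx (R : realType) (n : nat) (M : 'M[R]_n) : Prop :=
  M *m M^T = 1%:M.

(* O : T -> 'M[R]_n is a random matrix on the probability space (T, P)
   distributed according to Haar measure on O(n, R): O takes values in O(n),
   its entries are measurable, and its law is invariant under left
   multiplication by any orthogonal matrix (invariance of the law is stated
   through expectations of all bounded continuous test functions, which
   determine a Borel law on the metric space of matrices). By uniqueness of
   the (normalised) Haar measure this characterises the Haar law. *)
Definition haar_orthogonal (R : realType) (d : measure_display)
    (T : measurableType d) (P : probability T R) (n : nat)
    (O : T -> 'M[R]_n) : Prop :=
  [/\ forall w, orthogonal_mx (O w),
      forall i j, measurable_fun setT (fun w => O w i j) &
      forall U : 'M[R]_n, orthogonal_mx U ->
      forall g : 'M[R]_n -> R, continuous g ->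
        (exists M : R, forall x, `|g x| <= M) ->
        (\int[P]_w (g (U *m O w))%:E = \int[P]_w (g (O w))%:E)%E ].

Definition p2 (R : realType) (n : nat) (M : 'M[R]_n) : R := \tr (M *m M).

(* Main.v *)
Require Import Defs.
From HB Require Import structures.
From mathcomp Require Import all_boot all_order all_algebra.
From mathcomp Require Import all_classical all_reals all_analysis.
From mathcomp Require Import ring lra measurable_realfun.
Import Order.TTheory GRing.Theory Num.Theory.
Import numFieldNormedType.Exports.
Local Open Scope ring_scope.
Local Open Scope classical_set_scope.
Set Implicit Arguments. Unset Strict Implicit. Unset Printing Implicit Defensive.

Section scalar.
Variable R : realType.

Definition xf (a al be t : R) := a + al * sin t + be * (1 - cos t).
Definition yf (al be t : R) := al + be * sin t - al * (1 - cos t).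

Lemma is_derive_xf (a al be t : R) :
  is_derive t 1 (xf a al be) (al * cos t + be * sin t).
Proof.
have -> : xf a al be = cst a + al \*: sin + be \*: (cst 1 - cos).
  by apply/funext => s /=; rewrite /xf.
apply: is_derive_eq.
by rewrite add0r sub0r opprK.
Qed.

Lemma is_derive_yf (al be t : R) :
  is_derive t 1 (yf al be) (be * cos t - al * sin t).
Proof.
have -> : yf al be = cst al + be \*: sin - al \*: (cst 1 - cos).
  by apply/funext => s /=; rewrite /yf.
apply: is_derive_eq.
by rewrite add0r sub0r opprK.
Qed.

Variable f : R -> R.
Hypothesis hf : forall x, derivable f x 1.
Hypothesis hf1 : forall x, derivable (derive1 f) x 1.

Lemma cont_f : continuous f.
Proof. by move=> x; apply/differentiable_continuous/derivable1_diffP. Qed.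
Lemma cont_f1 : continuous (derive1 f).
Proof. by move=> x; apply/differentiable_continuous/derivable1_diffP. Qed.

Definition phi (a al be t : R) := f (xf a al be t) * yf al be t.
Definition dphi (a al be t : R) :=
  f (xf a al be t) * (be * cos t - al * sin t) +
  yf al be t * (derive1 f (xf a al be t) * (al * cos t + be * sin t)).

Lemma is_derive_phi (a al be t : R) : is_derive t 1 (phi a al be) (dphi a al be t).
Proof.
have hfx : is_derive (xf a al be t) 1 f (derive1 f (xf a al be t)).
  by rewrite derive1E; apply: derivableP.
have hc := is_derive1_comp hfx (is_derive_xf a al be t).
have hy := is_derive_yf al be t.
have -> : phi a al be = (f \o xf a al be) * yf al be by apply/funext.
apply: is_derive_eq.
by rewrite /dphi /=.
Qed.

Lemma bounded_on (g : R -> R) : continuous g -> forall r,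
  exists B, forall x, `|x| <= r -> `|g x| <= B.
Proof.
move=> cg r.
have [r0|r0] := ltP r 0.
  by exists 0 => x xr; have := le_lt_trans (normr_ge0 x) (le_lt_trans xr r0); rewrite ltxx.
have rr : - r <= r by rewrite lerNl (le_trans _ r0)// oppr_le0.
have cn : {within `[(- r), r], continuous (fun x => `|g x|)}.
  apply: continuous_subspaceT => x.
  exact: (continuous_comp (cg x) (@norm_continuous _ R^o _)).
have [c _ hc] := EVT_max rr cn.
exists `|g c| => x xr; apply: hc.
by rewrite in_itv /= -ler_norml.
Qed.

Lemma norm_lin2 (u v c s S : R) : `|u| <= S -> `|v| <= S -> `|c| <= 1 -> `|s| <= 1 ->
  `|u * c + v * s| <= S + S.
Proof.
move=> hu hv hc hs.
apply: (le_trans (ler_normD _ _)); rewrite !normrM.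
apply: lerD.
  by rewrite -[S]mulr1; apply: ler_pM.
by rewrite -[S]mulr1; apply: ler_pM.
Qed.


Lemma norm_1cos (t : R) : `|1 - cos t| <= 2.
Proof.
apply: (le_trans (ler_normB _ _)); rewrite normr1.
by rewrite [2]/(1 + 1) lerD2l cos_max.
Qed.

Lemma norm_xf (a al be t S : R) : `|a| <= S -> `|al| <= S -> `|be| <= S ->
  `|xf a al be t| <= S *+ 4.
Proof.
move=> ha hal hbe; rewrite /xf.
have S0 : 0 <= S := le_trans (normr_ge0 _) ha.
apply: (le_trans (ler_normD _ _)).
rewrite (_ : S *+ 4 = (S + S) + S * 2); last by rewrite -mulr_natr; lra.
apply: lerD; last by rewrite normrM; apply: ler_pM => //; exact: norm_1cos.
apply: (le_trans (ler_normD _ _)); apply: lerD => //.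
by rewrite normrM -[S]mulr1; apply: ler_pM => //; exact: sin_max.
Qed.

Lemma norm_yf (al be t S : R) : `|al| <= S -> `|be| <= S ->
  `|yf al be t| <= S *+ 4.
Proof.
move=> hal hbe; rewrite /yf.
have S0 : 0 <= S := le_trans (normr_ge0 _) hal.
apply: (le_trans (ler_normB _ _)).
rewrite (_ : S *+ 4 = (S + S) + S * 2); last by rewrite -mulr_natr; lra.
apply: lerD; last by rewrite normrM; apply: ler_pM => //; exact: norm_1cos.
apply: (le_trans (ler_normD _ _)); apply: lerD => //.
by rewrite normrM -[S]mulr1; apply: ler_pM => //; exact: sin_max.
Qed.

Lemma dphi_bound (S : R) : exists C, forall a al be t,
  `|a| <= S -> `|al| <= S -> `|be| <= S -> `|dphi a al be t| <= C.
Proof.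
have [F0 hF0] := bounded_on cont_f (S *+ 4).
have [F1 hF1] := bounded_on cont_f1 (S *+ 4).
exists (F0 * (S + S) + S *+ 4 * (F1 * (S + S))) => a al be t ha hal hbe.
have S0 : 0 <= S := le_trans (normr_ge0 _) ha.
have hx := norm_xf t ha hal hbe.
have hy := norm_yf t hal hbe.
rewrite /dphi; apply: (le_trans (ler_normD _ _)); rewrite !normrM.
apply: lerD.
  apply: ler_pM => //; first exact: hF0.
  by rewrite -mulNr; apply: norm_lin2 => //;
    rewrite ?normrN ?cos_max ?sin_max.
apply: ler_pM => //.
apply: ler_pM => //; first exact: hF1.
by apply: norm_lin2 => //; rewrite ?cos_max ?sin_max.
Qed.

Lemma phi_bound (S : R) : exists C, forall a al be t,
  `|a| <= S -> `|al| <= S -> `|be| <= S -> `|phi a al be t| <= C.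
Proof.
have [F0 hF0] := bounded_on cont_f (S *+ 4).
exists (F0 * S *+ 4) => a al be t ha hal hbe.
rewrite /phi normrM -mulrnAr; apply: ler_pM => //.
- exact: hF0 (norm_xf t ha hal hbe).
- exact: norm_yf.
Qed.

End scalar.

Section mat.
Variables (R : realType) (n : nat).

Lemma orth_U (K K2 : 'M[R]_n) (s co : R) : K^T = -K -> K2^T = K2 ->
  K *m K = K2 -> K *m K2 = -K -> K2 *m K = -K -> K2 *m K2 = -K2 ->
  co ^+ 2 + s ^+ 2 = 1 ->
  (1%:M + s *: K + (1 - co) *: K2) *m (1%:M + s *: K + (1 - co) *: K2)^T = 1%:M.
Proof.
move=> hKT hK2T hKK hKK2 hK2K hK2K2 hcs.
rewrite !linearD /= !linearZ /= trmx1 hKT hK2T.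
rewrite !(mulmxDl, mulmxDr, mul1mx, mulmx1, mulmxN, mulNmx, =^~ scalemxAl, =^~ scalemxAr).
rewrite ?(hKK, hKK2, hK2K, hK2K2).
apply/matrixP => i j; rewrite !mxE.
apply/eqP; rewrite -subr_eq0; apply/eqP.
transitivity ((1 - (co ^+ 2 + s ^+ 2)) * K2 i j); first by ring.
by rewrite hcs subrr mul0r.
Qed.

End mat.

Section mat2.
Variables (R : realType) (n : nat).

Lemma trE (C M : 'M[R]_n) : \tr (C *m M) = \sum_i \sum_k C i k * M k i.
Proof. by rewrite /mxtrace; apply: eq_bigr => i _; rewrite mxE. Qed.

Lemma orth_entry (M : 'M[R]_n) i j : orthogonal_mx M -> `|M i j| <= 1.
Proof.
move=> hM.
have : (M *m M^T) i i = 1 by rewrite hM mxE eqxx.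
rewrite mxE (bigD1 j) //= mxE => h.
have h2 : M i j * M i j <= 1.
  rewrite -h lerDl; apply: sumr_ge0 => k _; rewrite mxE.
  by rewrite -expr2 sqr_ge0.
rewrite -(@expr_le1 _ 2) // real_normK ?num_real // expr2.
Qed.

Lemma tr_bound (C M : 'M[R]_n) : orthogonal_mx M ->
  `|\tr (C *m M)| <= \sum_i \sum_k `|C i k|.
Proof.
move=> hM; rewrite trE.
apply: (le_trans (ler_norm_sum _ _ _)); apply: ler_sum => i _.
apply: (le_trans (ler_norm_sum _ _ _)); apply: ler_sum => k _.
rewrite normrM -[X in _ <= X]mulr1; apply: ler_wpM2l => //.
exact: orth_entry.
Qed.

Lemma cont_tr (C : 'M[R]_n) : continuous (fun M : 'M[R]_n => \tr (C *m M)).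
Proof.
have -> : (fun M : 'M[R]_n => \tr (C *m M)) =
    (fun M => \sum_i \sum_k C i k * M k i).
  by apply/funext => M; rewrite trE.
apply: continuous_big => [|i _].
  exact: add_continuous.
apply: continuous_big => [|k _].
  exact: add_continuous.
move=> M; apply: (@cvgM _ _ (nbhs M) _ (fun _ => C i k) (fun N => N k i)); first exact: cvg_cst.
exact: coord_continuous.
Qed.

Lemma tr_expand (C K K2 M : 'M[R]_n) (s c : R) :
  \tr (C *m ((1%:M + s *: K + c *: K2) *m M)) =
  \tr (C *m M) + s * \tr (C *m (K *m M)) + c * \tr (C *m (K2 *m M)).
Proof.
by rewrite !mulmxDl !mulmxDr mul1mx -!scalemxAl -!scalemxAr !mxtraceD !mxtraceZ.
Qed.


Lemma tr_delta (p q : 'I_n) (B : 'M[R]_n) : \tr (delta_mx p q *m B) = B q p.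
Proof.
rewrite trE (bigD1 p) //=.
rewrite [X in _ + X]big1 => [|k kp]; last first.
  by apply: big1 => l _; rewrite mxE (negbTE kp) mul0r.
rewrite addr0 (bigD1 q) //= [X in _ + X]big1 => [|l lq]; last by rewrite mxE (negbTE lq) andbF mul0r.
by rewrite mxE !eqxx mul1r !addr0.
Qed.

Lemma tr_AdM (A M : 'M[R]_n) p q :
  \tr (A *m (delta_mx p q *m M)) = (M *m A) q p.
Proof. by rewrite mxtrace_mulC -mulmxA tr_delta. Qed.

Definition Kg (i j : 'I_n) : 'M[R]_n := delta_mx i j - delta_mx j i.

Lemma Kg_tr i j : (Kg i j)^T = - Kg i j.
Proof. by rewrite /Kg linearB /= !trmx_delta opprB. Qed.

Lemma Kg_sq i j : Kg i j *m Kg i j =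
  delta_mx i j *+ (j == i) - delta_mx i i - delta_mx j j + delta_mx j i *+ (i == j).
Proof.
rewrite /Kg mulmxBl !mulmxBr !mul_delta_mx_cond !eqxx /=.
by rewrite opprB addrA !mulr1n addrAC.
Qed.


Lemma Kg_cube i j : Kg i j *m (Kg i j *m Kg i j) = - Kg i j.
Proof.
case: (eqVneq i j) => [<-|ij]; first by rewrite /Kg subrr !mul0mx oppr0.
have ji : (j == i) = false by rewrite eq_sym (negbTE ij).
rewrite Kg_sq ji (negbTE ij) !mulr0n sub0r addr0 /Kg.
rewrite mulmxBl !mulmxBr !mulmxN !mul_delta_mx_cond ji (negbTE ij) !eqxx !mulr0n !mulr1n.
by rewrite !oppr0 !addr0 sub0r opprK opprB addrC.
Qed.


Lemma sum_pick (F : 'I_n -> R) i : \sum_j F j *+ (j == i) = F i.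
Proof.
rewrite (bigD1 i) //= eqxx mulr1n big1 ?addr0 // => j ji.
by rewrite (negbTE ji) mulr0n.
Qed.

Lemma sum_pick' (F : 'I_n -> R) i : \sum_j F j *+ (i == j) = F i.
Proof. by rewrite -(sum_pick F i); apply: eq_bigr => j _; rewrite eq_sym. Qed.

Lemma tr_beta (A M : 'M[R]_n) i j : \tr (A *m (Kg i j *m Kg i j *m M)) =
  (M *m A) j i *+ (j == i) - (M *m A) i i - (M *m A) j j + (M *m A) i j *+ (i == j).
Proof.
rewrite Kg_sq; case: (eqVneq i j) => [<-|ij].
  rewrite ?eqxx !mulr1n.
  by rewrite !(mulmxDl, mulmxBl, mulmxDr, mulmxBr, mulNmx, mulmxN) !(raddfD, raddfN) /= !tr_AdM.
rewrite !mulr0n !(mulmxDl, mulmxBl, mulmxDr, mulmxBr, mul0mx, mulmx0, mulNmx, mulmxN).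
by rewrite !(raddfD, raddfN) /= !tr_AdM mxtrace0.
Qed.

Lemma sum_beta (A M : 'M[R]_n) : \sum_i \sum_j \tr (A *m (Kg i j *m Kg i j *m M)) =
  (2 - n%:R * 2) * \tr (A *m M).
Proof.
under eq_bigr do under eq_bigr do rewrite tr_beta.
under eq_bigr do rewrite !(big_split, sumrB) /= sum_pick sum_pick' sumr_const card_ord.
under eq_bigr do rewrite sumrN.
rewrite !big_split /= sumrN sumr_const card_ord sumrMnl sumrN.
rewrite -[\sum_(i < n) (M *m A) i i]/(\tr (M *m A)) mxtrace_mulC.
ring.
Qed.


Lemma tr_alpha (A M : 'M[R]_n) i j :
  \tr (A *m (Kg i j *m M)) = (M *m A) j i - (M *m A) i j.
Proof. by rewrite /Kg mulmxBl mulmxBr raddfB /= !tr_AdM. Qed.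

Lemma sum_alpha_B (B : 'M[R]_n) :
  \sum_i \sum_j (B j i - B i j) ^+ 2 =
  (\tr (B *m B^T) - \tr (B *m B)) *+ 2.
Proof.
have e1 : \tr (B *m B^T) = \sum_i \sum_j B i j ^+ 2.
  by rewrite trE; apply: eq_bigr => i _; apply: eq_bigr => j _; rewrite mxE expr2.
have e2 : \sum_i \sum_j B j i ^+ 2 = \sum_i \sum_j B i j ^+ 2.
  by rewrite exchange_big.
have e3 : \sum_i \sum_j B j i * B i j = \tr (B *m B).
  by rewrite trE; apply: eq_bigr => i _; apply: eq_bigr => j _; rewrite mulrC.
under eq_bigr do under eq_bigr do rewrite sqrrB.
under eq_bigr do rewrite !(big_split, sumrB) /=.
under eq_bigr do rewrite sumrN sumrMnl.
rewrite !big_split /= sumrN sumrMnl e2 e3 e1.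
ring.
Qed.

Lemma sum_alpha (A M : 'M[R]_n) :
  \sum_i \sum_j \tr (A *m (Kg i j *m M)) ^+ 2 =
  (\tr ((M *m A) *m (M *m A)^T) - \tr ((M *m A) *m (M *m A))) *+ 2.
Proof.
rewrite -sum_alpha_B; apply: eq_bigr => i _; apply: eq_bigr => j _.
by rewrite tr_alpha.
Qed.

End mat2.

Lemma clamp_bound (R : realType) (C y : R) : 0 <= C ->
  `|Num.max (- C) (Num.min C y)| <= C.
Proof.
move=> C0; rewrite ler_norml; apply/andP; split.
  by rewrite le_max lexx.
by rewrite ge_max ge_min lexx /= andbT (@le_trans _ _ 0) // oppr_le0.
Qed.

Lemma clamp_id (R : realType) (C y : R) : `|y| <= C ->
  Num.max (- C) (Num.min C y) = y.
Proof.
move=> /[dup] hy; rewrite ler_norml => /andP[h1 h2].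
by rewrite (min_r h2) (max_r h1).
Qed.

Section main.
Variables (R : realType) (n : nat) (A : 'M[R]_n) (d : measure_display)
  (T : measurableType d) (P : probability T R) (O : T -> 'M[R]_n) (f : R -> R).
Hypothesis horth : forall w, orthogonal_mx (O w).
Hypothesis hmeas : forall i j, measurable_fun setT (fun w => O w i j).
Hypothesis hinv : forall U : 'M[R]_n, orthogonal_mx U ->
      forall g : 'M[R]_n -> R, continuous g ->
        (exists M : R, forall x, `|g x| <= M) ->
        (\int[P]_w (g (U *m O w))%:E = \int[P]_w (g (O w))%:E)%E.
Hypothesis hf : forall x, derivable f x 1.
Hypothesis hf1 : forall x, derivable (derive1 f) x 1.

Lemma meas_tr (C : 'M[R]_n) : measurable_fun setT (fun w => \tr (C *m O w)).
Proof.
rewrite (_ : (fun w => _) = (fun w => \sum_i \sum_k C i k * O w k i)); last first.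
  by apply/funext => w; rewrite trE.
apply: measurable_sum => i; apply: measurable_sum => k.
by apply: measurable_funM => //; exact: measurable_cst.
Qed.

Lemma meas_trM (C : 'M[R]_n) : measurable_fun setT (fun w => \tr (A *m (C *m O w))).
Proof.
rewrite (_ : (fun w => _) = (fun w => \tr ((A *m C) *m O w))); last first.
  by apply/funext => w; rewrite mulmxA.
exact: meas_tr.
Qed.

Lemma bnd_trM (C : 'M[R]_n) w :
  `|\tr (A *m (C *m O w))| <= \sum_i \sum_k `|(A *m C) i k|.
Proof. by rewrite mulmxA; apply: tr_bound. Qed.

Lemma int_bnd (F : T -> R) : measurable_fun setT F ->
  (exists C, forall w, `|F w| <= C) -> P.-integrable setT (EFin \o F).
Proof.
move=> mF [C hC]; apply: measurable_bounded_integrable => //.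
  exact: (le_lt_trans (probability_le1 P measurableT) (ltry 1)).
rewrite /bounded_near; near=> M => w _ /=.
apply: le_trans (hC w) _; near: M; exact: nbhs_pinfty_ge (num_real C).
Unshelve. all: end_near. Qed.

Lemma meas_comp (g : R -> R) (X : T -> R) : continuous g ->
  measurable_fun setT X -> measurable_fun setT (fun w => g (X w)).
Proof.
move=> cg mX; exact: (measurableT_comp (continuous_measurable_fun cg) mX).
Qed.

Lemma sum_abs_ge0 (C : 'M[R]_n) : 0 <= \sum_i \sum_k `|C i k|.
Proof. by apply: sumr_ge0 => i _; apply: sumr_ge0 => k _. Qed.


Lemma key (K : 'M[R]_n) : K^T = - K -> K *m (K *m K) = - K ->
  (\int[P]_w ((f (\tr (A *m O w)) * \tr (A *m (K *m K *m O w)) +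
     \tr (A *m (K *m O w)) * (derive1 f (\tr (A *m O w)) * \tr (A *m (K *m O w))))%:E)
   = 0)%E.
Proof.
move=> hKT hK3.
have hK2T : (K *m K)^T = K *m K by rewrite trmx_mul hKT mulmxN mulNmx opprK.
have hK2K : K *m K *m K = - K by rewrite -mulmxA hK3.
have hK2K2 : (K *m K) *m (K *m K) = - (K *m K) by rewrite mulmxA hK2K mulNmx.
pose a := fun w => \tr (A *m O w).
pose al := fun w => \tr (A *m (K *m O w)).
pose be := fun w => \tr (A *m (K *m K *m O w)).
pose S := \sum_i \sum_k `|A i k| + \sum_i \sum_k `|(A *m K) i k| +
  \sum_i \sum_k `|(A *m (K *m K)) i k|.
have S1 := sum_abs_ge0 A; have S2 := sum_abs_ge0 (A *m K);
  have S3 := sum_abs_ge0 (A *m (K *m K)).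
have ha w : `|a w| <= S.
  apply: le_trans (tr_bound A (horth w)) _.
  apply: (le_trans _ (lerD (lerD (lexx _) S2) S3)).
  by rewrite !addr0.
have hal w : `|al w| <= S.
  apply: le_trans (bnd_trM K w) _.
  apply: (le_trans _ (lerD (lerD S1 (lexx _)) S3)).
  by rewrite add0r addr0.
have hbe w : `|be w| <= S.
  apply: le_trans (bnd_trM (K *m K) w) _.
  apply: (le_trans _ (lerD (lerD S1 S2) (lexx _))).
  by rewrite !add0r.
have ma : measurable_fun setT a := meas_tr A.
have mal : measurable_fun setT al := meas_trM K.
have mbe : measurable_fun setT be := meas_trM (K *m K).
pose F := fun t w => phi f (a w) (al w) (be w) t.
have mF t : measurable_fun setT (F t).
  rewrite /F /phi; apply: measurable_funM.
    apply: meas_comp; first exact: cont_f.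
    rewrite /xf; apply: measurable_funD; first apply: measurable_funD => //.
      by apply: measurable_funM => //; exact: measurable_cst.
    by apply: measurable_funM => //; exact: measurable_cst.
  rewrite /yf; apply: measurable_funB; first apply: measurable_funD => //.
    by apply: measurable_funM => //; exact: measurable_cst.
  by apply: measurable_funM => //; exact: measurable_cst.
have [C0 hC0] := phi_bound hf S.
have [C2 hC2] := dphi_bound hf hf1 S.
have iF t : P.-integrable setT (EFin \o F t).
  apply: int_bnd => //; exists C0 => w; exact: hC0.
have inv t : Rintegral P setT (F t) = Rintegral P setT (F 0).
  pose U := 1%:M + sin t *: K + (1 - cos t) *: (K *m K).
  have oU : orthogonal_mx U.
    exact: (orth_U hKT hK2T erefl hK3 hK2K hK2K2 (cos2Dsin2 t)).
  pose h := fun M : 'M[R]_n => f (\tr (A *m M)) * \tr ((A *m K) *m M).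
  pose C1 := `|C0|.
  pose g := fun M => Num.max (- C1) (Num.min C1 (h M)).
  have ch : continuous h.
    move=> M; apply: (@cvgM _ _ (nbhs M) _ (fun M => f (\tr (A *m M)))
      (fun M => \tr ((A *m K) *m M))).
      apply: (@continuous_comp _ _ _ (fun M => \tr (A *m M)) f).
        exact: cont_tr.
      exact: cont_f.
    exact: (@cont_tr _ _ (A *m K) M).
  have cg : continuous g.
    move=> M; apply: (@continuous_max _ _ (fun _ => - C1) (fun M => Num.min C1 (h M))).
      exact: cst_continuous.
    apply: (@continuous_min _ _ (fun _ => C1) h); [exact: cst_continuous | exact: ch].
  have bg : exists M, forall x, `|g x| <= M.
    by exists C1 => x; apply: clamp_bound; exact: normr_ge0.
  have hphi M : h M = phi f (\tr (A *m M)) (\tr (A *m (K *m M)))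
      (\tr (A *m (K *m K *m M))) 0.
    by rewrite /h /phi /xf /yf sin0 cos0 subrr !mulr0 !addr0 subr0 mulmxA.
  have hUM M : h (U *m M) = phi f (\tr (A *m M)) (\tr (A *m (K *m M)))
      (\tr (A *m (K *m K *m M))) t.
    rewrite /h /phi /xf /yf /U tr_expand tr_expand.
    have e1 : \tr (A *m K *m M) = \tr (A *m (K *m M)) by rewrite mulmxA.
    have e2 : \tr (A *m K *m (K *m M)) = \tr (A *m (K *m K *m M)).
      by rewrite !mulmxA.
    have e3 : \tr (A *m K *m (K *m K *m M)) = - \tr (A *m (K *m M)).
      rewrite !mulmxA -(mulmxA A K K) -(mulmxA A (K *m K) K) hK2K.
      by rewrite mulmxN mulNmx raddfN.
    rewrite e1 e2 e3; congr (_ * _); last by ring.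
    by congr f; ring.
  have hgU w : g (U *m O w) = F t w.
    rewrite /g hUM clamp_id //; apply: le_trans (hC0 _ _ _ _ _ _ _) _.
    - exact: ha.
    - exact: hal.
    - exact: hbe.
    - exact: ler_norm.
  have hg0 w : g (O w) = F 0 w.
    rewrite /g hphi clamp_id //; apply: le_trans (hC0 _ _ _ _ _ _ _) _.
    - exact: ha.
    - exact: hal.
    - exact: hbe.
    - exact: ler_norm.
  have := hinv oU cg bg.
  rewrite (_ : (fun w => (g (U *m O w))%:E) = (fun w => (F t w)%:E)); last first.
    by apply/funext => w; rewrite hgU.
  rewrite (_ : (fun w => (g (O w))%:E) = (fun w => (F 0 w)%:E)); last first.
    by apply/funext => w; rewrite hg0.
  by rewrite /Rintegral => ->.
pose D := fun w => dphi f (a w) (al w) (be w) 0.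
have hD w : `|D w| <= C2 by apply: hC2.
have C2ge0 : 0 <= C2 := le_trans (normr_ge0 _) (hD point).
have mx t : measurable_fun setT (fun w => xf (a w) (al w) (be w) t).
  rewrite /xf; apply: measurable_funD; first apply: measurable_funD => //.
    by apply: measurable_funM => //; exact: measurable_cst.
  by apply: measurable_funM => //; exact: measurable_cst.
have my t : measurable_fun setT (fun w => yf (al w) (be w) t).
  rewrite /yf; apply: measurable_funB; first apply: measurable_funD => //.
    by apply: measurable_funM => //; exact: measurable_cst.
  by apply: measurable_funM => //; exact: measurable_cst.
have mD : measurable_fun setT D.
  rewrite /D /dphi; apply: measurable_funD.
    apply: measurable_funM; first by apply: meas_comp (mx 0); exact: cont_f.
    apply: measurable_funB; apply: measurable_funM => //; exact: measurable_cst.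
  apply: measurable_funM; first exact: my.
  apply: measurable_funM; first by apply: meas_comp (mx 0); exact: cont_f1.
  apply: measurable_funD; apply: measurable_funM => //; exact: measurable_cst.
have iD : P.-integrable setT (EFin \o D).
  by apply: int_bnd => //; exists C2.
have dF x y : partial1of2 F x y = dphi f (a y) (al y) (be y) x.
  rewrite partial1of2E.
  have [_ <-] := is_derive_phi hf (a y) (al y) (be y) x.
  by [].
have derF x y : derivable (F^~ y) x 1.
  by have [] := is_derive_phi hf (a y) (al y) (be y) x.
have iG : P.-integrable setT (EFin \o cst C2).
  by apply: int_bnd; [exact: measurable_cst | exists `|C2| => w].
have Ia : `]-1, 1[%classic (0 : R).
  by rewrite /= in_itv /= oppr_lt0 ltr01.
have du := @differentiation_under_integral R d T P F setT measurableT 0 (-1) 1 Ia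
  (fun x _ => iF x)
  (fun x y _ _ => derF x y)
  (cst C2) (fun _ => C2ge0) iG
  (fun x y _ _ => (eq_ind_r (fun z => `|z| <= C2) (hC2 _ _ _ x (ha y) (hal y) (hbe y)) (dF x y))).
have e0 : (fun x' => \int[P]_y F x' y) = cst (\int[P]_y F 0 y).
  by apply/funext => t; exact: inv t.
rewrite e0 derive1_cst in du.
have RD : \int[P]_w D w = 0.
  rewrite du; apply: eq_Rintegral => w _.
  by rewrite dF.
transitivity (\int[P]_w (D w)%:E)%E.
  apply: eq_integral => w _; congr EFin.
  rewrite /D /dphi /xf /yf sin0 cos0 subrr !mulr0 !addr0 subr0 !mulr1.
  by rewrite subr0.
rewrite -(fineK (integrable_fin_num measurableT iD)).
by rewrite -/(Rintegral P setT D) RD.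
Qed.


Lemma int_D (C1 C2 : 'M[R]_n) : P.-integrable setT (EFin \o (fun w =>
  f (\tr (A *m O w)) * \tr (A *m (C2 *m O w)) +
  \tr (A *m (C1 *m O w)) * (derive1 f (\tr (A *m O w)) * \tr (A *m (C1 *m O w))))).
Proof.
have [F0 hF0] := bounded_on (cont_f hf) (\sum_i \sum_k `|A i k|).
have [F1 hF1] := bounded_on (cont_f1 hf1) (\sum_i \sum_k `|A i k|).
have hW w := tr_bound A (horth w).
apply: int_bnd.
  apply: measurable_funD; apply: measurable_funM.
  - by apply: meas_comp; [exact: cont_f | exact: meas_tr].
  - exact: meas_trM.
  - exact: meas_trM.
  - apply: measurable_funM; last exact: meas_trM.
    by apply: meas_comp; [exact: cont_f1 | exact: meas_tr].
exists (F0 * \sum_i \sum_k `|(A *m C2) i k| +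
  (\sum_i \sum_k `|(A *m C1) i k|) * (F1 * \sum_i \sum_k `|(A *m C1) i k|)) => w.
apply: (le_trans (ler_normD _ _)); rewrite !normrM; apply: lerD.
  have h1 := ler_pM (normr_ge0 _) (normr_ge0 _) (hF0 _ (hW w)) (bnd_trM C2 w).
  exact: h1.
have h2 := ler_pM (normr_ge0 _) (normr_ge0 _) (hF1 _ (hW w)) (bnd_trM C1 w).
have h3 := ler_pM (normr_ge0 _) (mulr_ge0 (normr_ge0 _) (normr_ge0 _)) (bnd_trM C1 w) h2.
exact: h3.
Qed.

Lemma final : (2 <= n)%N -> \tr (A *m A^T) = n%:R ->
  (\int[P]_w (((derive1 f) (\tr (A *m O w)) - \tr (A *m O w) * f (\tr (A *m O w)))%:E)
   = \int[P]_w (((p2 (A *m O w) - 1) / (n%:R - 1) * (derive1 f) (\tr (A *m O w)))%:E))%E.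
Proof.
move=> n2 hA.
pose W := fun w => \tr (A *m O w).
pose Dij := fun i j w => f (W w) * \tr (A *m (Kg R i j *m Kg R i j *m O w)) +
  \tr (A *m (Kg R i j *m O w)) * (derive1 f (W w) * \tr (A *m (Kg R i j *m O w))).
pose SD := fun w => \sum_i \sum_j Dij i j w.
have iD i j : P.-integrable setT (EFin \o Dij i j) := int_D (Kg R i j) (Kg R i j *m Kg R i j).
have iDi i : P.-integrable setT (fun w => \sum_j (Dij i j w)%:E).
  by apply: (integrable_sum measurableT) => j _; exact: iD.
have iSD : P.-integrable setT (EFin \o SD).
  rewrite (_ : EFin \o SD = fun w => \sum_i \sum_j (Dij i j w)%:E); last first.
    by apply/funext => w; rewrite /SD /= -sumEFin; apply: eq_bigr => i _; rewrite sumEFin.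
  by apply: (integrable_sum measurableT) => i _; exact: iDi.
have ISD : (\int[P]_w (SD w)%:E = 0)%E.
  rewrite (_ : (fun w => (SD w)%:E) = fun w => \sum_i \sum_j (Dij i j w)%:E); last first.
    by apply/funext => w; rewrite /SD /= -sumEFin; apply: eq_bigr => i _; rewrite sumEFin.
  rewrite (integral_sum measurableT iDi); apply: big1 => i _.
  rewrite (integral_sum measurableT (fun j => iD i j)); apply: big1 => j _.
  exact: key (Kg_tr R i j) (Kg_cube R i j).
have hSD w : SD w = f (W w) * ((2 - n%:R * 2) * W w) +
    derive1 f (W w) * ((n%:R - p2 (A *m O w)) *+ 2).
  rewrite /SD /Dij.
  have -> : \sum_i \sum_j (f (W w) * \tr (A *m (Kg R i j *m Kg R i j *m O w)) +
      \tr (A *m (Kg R i j *m O w)) * (derive1 f (W w) * \tr (A *m (Kg R i j *m O w)))) =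
    f (W w) * (\sum_i \sum_j \tr (A *m (Kg R i j *m Kg R i j *m O w))) +
    derive1 f (W w) * (\sum_i \sum_j \tr (A *m (Kg R i j *m O w)) ^+ 2).
    rewrite !mulr_sumr -big_split /=; apply: eq_bigr => i _.
    rewrite big_split /=; congr (_ + _); rewrite mulr_sumr; apply: eq_bigr => j _; ring.
  rewrite sum_beta sum_alpha.
  have tBB : \tr ((O w *m A) *m (O w *m A)^T) = n%:R.
    rewrite trmx_mul !mulmxA mxtrace_mulC !mulmxA (mulmx1C (horth w)) mul1mx.
    exact: hA.
  have tBB2 : \tr ((O w *m A) *m (O w *m A)) = p2 (A *m O w).
    by rewrite -!mulmxA mxtrace_mulC !mulmxA /p2 !mulmxA.
  by rewrite tBB tBB2.
have hn : (n%:R - 1 : R) != 0.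
  by rewrite subr_eq0 pnatr_eq1; apply/negP => /eqP h; move: n2; rewrite h.
pose c := ((n%:R - 1) * 2)^-1 : R.
pose L := fun w => derive1 f (W w) - W w * f (W w).
have iL : P.-integrable setT (EFin \o L).
  have [F0 hF0] := bounded_on (cont_f hf) (\sum_i \sum_k `|A i k|).
  have [F1 hF1] := bounded_on (cont_f1 hf1) (\sum_i \sum_k `|A i k|).
  have hW w := tr_bound A (horth w).
  apply: int_bnd.
    apply: measurable_funB.
      by apply: meas_comp; [exact: cont_f1 | exact: meas_tr].
    apply: measurable_funM; first exact: meas_tr.
    by apply: meas_comp; [exact: cont_f | exact: meas_tr].
  exists (F1 + (\sum_i \sum_k `|A i k|) * F0) => w.
  apply: (le_trans (ler_normB _ _)); apply: lerD; first exact: (hF1 _ (hW w)).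
  rewrite normrM.
  have h1 := ler_pM (normr_ge0 _) (normr_ge0 _) (hW w) (hF0 _ (hW w)).
  exact: h1.
have iC : P.-integrable setT (EFin \o (fun w => c * SD w)).
  rewrite (_ : EFin \o _ = fun w => (c%:E * (SD w)%:E)%E); last first.
    by apply/funext => w; rewrite /= EFinM.
  exact: integrableZl.
have I2 : (\int[P]_w (c * SD w)%:E = 0)%E.
  rewrite (_ : (fun w => (c * SD w)%:E) = fun w => (c%:E * (SD w)%:E)%E); last first.
    by apply/funext => w; rewrite EFinM.
  by rewrite (integralZl measurableT iSD) ISD mule0.
rewrite [RHS](eq_integral (fun w => (L w)%:E - (c * SD w)%:E)%E); last first.
  move=> w _; rewrite -EFinB hSD; congr EFin.
  rewrite /L /c /W; field.
  exact: hn.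
by rewrite (integralB_EFin measurableT iL iC) I2 sube0.
Qed.

End main.

Unset Implicit Arguments.

Theorem mainTheorem4 (R : realType) (n : nat) (A : 'M[R]_n)
    (d : measure_display) (T : measurableType d) (P : probability T R)
    (O : T -> 'M[R]_n) (f : R -> R) :
  (2 <= n)%N ->
  \tr (A *m A^T) = n%:R ->
  haar_orthogonal P O ->
  (forall x, derivable f x 1) ->
  (forall x, derivable (derive1 f) x 1) ->
  (exists M : R, forall x, `|derive1n 2 f x| <= M) ->
  let W := fun w => \tr (A *m O w) in
  (\int[P]_w (((derive1 f) (W w) - W w * f (W w))%:E)
   = \int[P]_w (((p2 (A *m O w) - 1) / (n%:R - 1) * (derive1 f) (W w))%:E))%E.
Proof.
move=> n2 hA [horth hmeas hinv] hf hf1 _ W.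
rewrite /W.
exact: (@final R n A d T P O f horth hmeas hinv hf hf1 n2 hA).
Qed.
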